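(* Let $\mathcal T$ be a ternary algebra over $\mathbb C$, i.e. a complex vector space equipped with a trilinear ternary multiplication $(a,b,c)\mapsto a\cdot b\cdot c$ which is associative of the first kind or associative of the second kind (see context). Let $\omega$ be a primitive cube root of unity and $\overline\omega$ its complex conjugate. For $a,b,c\in\mathcal T$ define the ternary commutator $$[a,b,c]=a\cdot b\cdot c+\omega\,b\cdot c\cdot a+\overline\omega\,c\cdot a\cdot b+c\cdot b\cdot a+\overline\omega\,b\cdot a\cdot c+\omega\,a\cdot c\cdot b$$ and its conjugate $$[a,b,c]^\ast=a\cdot b\cdot c+\overline\omega\,b\cdot c\cdot a+\omega\,c\cdot a\cdot b+c\cdot b\cdot a+\omega\,b\cdot a\cdot c+\overline\omega\,a\cdot c\cdot b.$$ Then for all $a,b,c,d,f\in\mathcal T$: $$[a,b,c]=\omega\,[b,c,a]=\overline\omega\,[c,a,b],\qquad [a,b,c]^\ast=\overline\omega\,[b,c,a]^\ast=\omega\,[c,a,b]^\ast,$$ and the ternary commutator satisfies the identity $$\sum_{(x_1,x_2,x_3,x_4,x_5)}\Big(\big[[x_1,x_2,x_3],x_4,x_5\big]+\big[[x_1,x_4,x_2],x_5,x_3\big]+\big[[x_1,x_5,x_4],x_3,x_2\big]+\big[[x_1,x_3,x_5],x_2,x_4\big]\Big)=0,$$ where the sum runs over the five cyclic permutations $(x_1,x_2,x_3,x_4,x_5)\in\{(a,b,c,d,f),(b,c,d,f,a),(c,d,f,a,b),(d,f,a,b,c),(f,a,b,c,d)\}$.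
   Context: A ternary multiplication on a complex vector space $\mathcal T$ is a trilinear map $\mathcal T\times\mathcal T\times\mathcal T\to\mathcal T$, $(a,b,c)\mapsto a\cdot b\cdot c$. It is associative of the first kind if $(a\cdot b\cdot c)\cdot d\cdot f=a\cdot(b\cdot c\cdot d)\cdot f=a\cdot b\cdot(c\cdot d\cdot f)$ for all $a,b,c,d,f\in\mathcal T$, and associative of the second kind if $(a\cdot b\cdot c)\cdot d\cdot f=a\cdot(d\cdot c\cdot b)\cdot f=a\cdot b\cdot(c\cdot d\cdot f)$ for all $a,b,c,d,f\in\mathcal T$. A ternary algebra is a complex vector space with a ternary multiplication associative of the first or of the second kind. *)

(* Defs.v *)
From HB Require Import structures.
From mathcomp Require Import all_boot all_order all_algebra.
From mathcomp Require Import reals.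
From mathcomp Require Import complex.
Set Implicit Arguments. Unset Strict Implicit. Unset Printing Implicit Defensive.
Import Order.TTheory GRing.Theory Num.Theory.
Local Open Scope ring_scope.

(* The complex numbers are modelled as R[i] for an arbitrary realType R
   (every realType is a complete archimedean ordered field, i.e. is R). *)

Section Ternary.
Variables (R : realType) (T : lmodType R[i]).

Definition trilinear (m : T -> T -> T -> T) : Prop :=
  [/\ forall (k : R[i]) a a' b c, m (k *: a + a') b c = k *: m a b c + m a' b c,
      forall (k : R[i]) a b b' c, m a (k *: b + b') c = k *: m a b c + m a b' c &
      forall (k : R[i]) a b c c', m a b (k *: c + c') = k *: m a b c + m a b c'].

Definition assoc_first_kind (m : T -> T -> T -> T) : Prop :=
  forall a b c d f,
    m (m a b c) d f = m a (m b c d) f /\ m a (m b c d) f = m a b (m c d f).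

Definition assoc_second_kind (m : T -> T -> T -> T) : Prop :=
  forall a b c d f,
    m (m a b c) d f = m a (m d c b) f /\ m a (m d c b) f = m a b (m c d f).

Definition ternary_algebra (m : T -> T -> T -> T) : Prop :=
  trilinear m /\ (assoc_first_kind m \/ assoc_second_kind m).

Definition tcomm (m : T -> T -> T -> T) (w : R[i]) (a b c : T) : T :=
  m a b c + w *: m b c a + (conjc w) *: m c a b
  + m c b a + (conjc w) *: m b a c + w *: m a c b.

Definition tcomm_conj (m : T -> T -> T -> T) (w : R[i]) (a b c : T) : T :=
  m a b c + (conjc w) *: m b c a + w *: m c a b
  + m c b a + w *: m b a c + (conjc w) *: m a c b.

Definition tcomm_block (m : T -> T -> T -> T) (w : R[i]) (x1 x2 x3 x4 x5 : T) : T :=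
  let br := tcomm m w in
  br (br x1 x2 x3) x4 x5 + br (br x1 x4 x2) x5 x3
  + br (br x1 x5 x4) x3 x2 + br (br x1 x3 x5) x2 x4.

End Ternary.

(* Main.v *)
Require Import Defs.
From HB Require Import structures.
From mathcomp Require Import all_boot all_order all_algebra.
From mathcomp Require Import reals.
From mathcomp Require Import complex.
From mathcomp Require Import ring.
Import Order.TTheory GRing.Theory Num.Theory.
Local Open Scope ring_scope.

Definition L0f : seq ((nat*nat)*seq nat) := [:: ((0,0),[:: 0; 1; 2; 3; 4]); ((0,1),[:: 1; 2; 0; 3; 4]); ((0,2),[:: 2; 0; 1; 3; 4]); ((0,0),[:: 2; 1; 0; 3; 4]); ((0,2),[:: 1; 0; 2; 3; 4]); ((0,1),[:: 0; 2; 1; 3; 4]); ((1,0),[:: 3; 4; 0; 1; 2]); ((1,1),[:: 3; 4; 1; 2; 0]); ((1,2),[:: 3; 4; 2; 0; 1]); ((1,0),[:: 3; 4; 2; 1; 0]); ((1,2),[:: 3; 4; 1; 0; 2]); ((1,1),[:: 3; 4; 0; 2; 1]); ((2,0),[:: 4; 0; 1; 2; 3]); ((2,1),[:: 4; 1; 2; 0; 3]); ((2,2),[:: 4; 2; 0; 1; 3]); ((2,0),[:: 4; 2; 1; 0; 3]); ((2,2),[:: 4; 1; 0; 2; 3]); ((2,1),[:: 4; 0; 2; 1; 3]); ((0,0),[:: 4; 3; 0; 1; 2]); ((0,1),[:: 4; 3; 1; 2; 0]); ((0,2),[:: 4; 3; 2; 0; 1]); ((0,0),[:: 4; 3; 2;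 1; 0]); ((0,2),[:: 4; 3; 1; 0; 2]); ((0,1),[:: 4; 3; 0; 2; 1]); ((2,0),[:: 3; 0; 1; 2; 4]); ((2,1),[:: 3; 1; 2; 0; 4]); ((2,2),[:: 3; 2; 0; 1; 4]); ((2,0),[:: 3; 2; 1; 0; 4]); ((2,2),[:: 3; 1; 0; 2; 4]); ((2,1),[:: 3; 0; 2; 1; 4]); ((1,0),[:: 0; 1; 2; 4; 3]); ((1,1),[:: 1; 2; 0; 4; 3]); ((1,2),[:: 2; 0; 1; 4; 3]); ((1,0),[:: 2; 1; 0; 4; 3]); ((1,2),[:: 1; 0; 2; 4; 3]); ((1,1),[:: 0; 2; 1; 4; 3])].
Definition L0s : seq ((nat*nat)*seq nat) := [:: ((0,0),[:: 0; 1; 2; 3; 4]); ((0,1),[:: 1; 2; 0; 3; 4]); ((0,2),[:: 2; 0; 1; 3; 4]); ((0,0),[:: 2; 1; 0; 3; 4]); ((0,2),[:: 1; 0; 2; 3; 4]); ((0,1),[:: 0; 2; 1; 3; 4]); ((1,0),[:: 3; 4; 0; 1; 2]); ((1,1),[:: 3; 4; 1; 2; 0]); ((1,2),[:: 3; 4; 2; 0; 1]); ((1,0),[:: 3; 4; 2; 1; 0]); ((1,2),[:: 3; 4; 1; 0; 2]); ((1,1),[:: 3; 4; 0; 2; 1]); ((2,0),[:: 4; 2; 1; 0; 3]); ((2,1),[:: 4; 0; 2; 1; 3]); ((2,2),[:: 4; 1; 0; 2; 3]); ((2,0),[:: 4; 0; 1; 2; 3]); ((2,2),[:: 4; 2;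 0; 1; 3]); ((2,1),[:: 4; 1; 2; 0; 3]); ((0,0),[:: 4; 3; 0; 1; 2]); ((0,1),[:: 4; 3; 1; 2; 0]); ((0,2),[:: 4; 3; 2; 0; 1]); ((0,0),[:: 4; 3; 2; 1; 0]); ((0,2),[:: 4; 3; 1; 0; 2]); ((0,1),[:: 4; 3; 0; 2; 1]); ((2,0),[:: 3; 2; 1; 0; 4]); ((2,1),[:: 3; 0; 2; 1; 4]); ((2,2),[:: 3; 1; 0; 2; 4]); ((2,0),[:: 3; 0; 1; 2; 4]); ((2,2),[:: 3; 2; 0; 1; 4]); ((2,1),[:: 3; 1; 2; 0; 4]); ((1,0),[:: 0; 1; 2; 4; 3]); ((1,1),[:: 1; 2; 0; 4; 3]); ((1,2),[:: 2; 0; 1; 4; 3]); ((1,0),[:: 2; 1; 0; 4; 3]); ((1,2),[:: 1; 0; 2; 4; 3]); ((1,1),[:: 0; 2; 1; 4; 3])].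
Definition S20 : seq (seq nat) := [:: [:: 0; 1; 2; 3; 4]; [:: 0; 3; 1; 4; 2]; [:: 0; 4; 3; 2; 1]; [:: 0; 2; 4; 1; 3]; [:: 1; 2; 3; 4; 0]; [:: 1; 4; 2; 0; 3]; [:: 1; 0; 4; 3; 2]; [:: 1; 3; 0; 2; 4]; [:: 2; 3; 4; 0; 1]; [:: 2; 0; 3; 1; 4]; [:: 2; 1; 0; 4; 3]; [:: 2; 4; 1; 3; 0]; [:: 3; 4; 0; 1; 2]; [:: 3; 1; 4; 2; 0]; [:: 3; 2; 1; 0; 4]; [:: 3; 0; 2; 4; 1]; [:: 4; 0; 1; 2; 3]; [:: 4; 2; 0; 3; 1]; [:: 4; 3; 2; 1; 0]; [:: 4; 1; 3; 0; 2]].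

Fixpoint chk (fuel : nat) (l : seq (nat * seq nat)) : bool :=
  match fuel with
  | 0 => nilp l
  | k.+1 => match l with
            | [::] => true
            | t :: r =>
              let t1 := (((t.1 + 1) %% 3)%N, t.2) in
              let t2 := (((t.1 + 2) %% 3)%N, t.2) in
              [&& t1 \in r, t2 \in rem t1 r & chk k (rem t2 (rem t1 r))]
            end
  end.

Definition comp (s : seq nat) (p : (nat * nat) * seq nat) : nat * seq nat :=
  (((p.1.1 + p.1.2) %% 3)%N, [seq nth 0%N s i | i <- p.2]).

Lemma chkf : chk 720 [seq comp s p | s <- S20, p <- L0f]. Proof. by vm_compute. Qed.
Lemma chks : chk 720 [seq comp s p | s <- S20, p <- L0s]. Proof. by vm_compute. Qed.

Section Main.
Variables (R : realType) (T : lmodType R[i]) (m : T -> T -> T -> T) (w : R[i]).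
Hypothesis tri : trilinear m.
Hypothesis prim : 3.-primitive_root w.

Lemma w3 : w ^+ 3 = 1. Proof. exact: prim_expr_order. Qed.

Lemma w_sum0 : 1 + w + w ^+ 2 = 0.
Proof.
have wn1 : w != 1.
  by apply/negP; rewrite -[w]expr1 -(prim_order_dvd prim).
have : (w - 1) * (1 + w + w ^+ 2) = 0.
  have -> : (w - 1) * (1 + w + w ^+ 2) = w ^+ 3 - 1 by ring.
  by rewrite w3 subrr.
by move/eqP; rewrite mulf_eq0 subr_eq0 (negbTE wn1) /= => /eqP.
Qed.

Lemma conjw : conjc w = w ^+ 2.
Proof.
have nw : `|w| = 1.
  apply/eqP; rewrite -(@pexpr_eq1 _ _ 3) //; by rewrite -normrX w3 normr1.
have h : w * conjc w = 1 by rewrite -sqr_normc nw expr1n.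
by rewrite -[conjc w]mul1r -w3 exprSr -mulrA h mulr1.
Qed.

Lemma m0l b c : m 0 b c = 0.
Proof.
case: tri => h _ _; have := h 1 0 0 b c; rewrite !scale1r addr0 => /(congr1 (fun x => x - m 0 b c)).
by rewrite subrr addrK => <-.
Qed.
Lemma m0m a c : m a 0 c = 0.
Proof.
case: tri => _ h _; have := h 1 a 0 0 c; rewrite !scale1r addr0 => /(congr1 (fun x => x - m a 0 c)).
by rewrite subrr addrK => <-.
Qed.
Lemma m0r a b : m a b 0 = 0.
Proof.
case: tri => _ _ h; have := h 1 a b 0 0; rewrite !scale1r addr0 => /(congr1 (fun x => x - m a b 0)).
by rewrite subrr addrK => <-.
Qed.
Lemma mDl x y b c : m (x + y) b c = m x b c + m y b c.
Proof. by case: tri => h _ _; have := h 1 x y b c; rewrite !scale1r. Qed.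
Lemma mDm a x y c : m a (x + y) c = m a x c + m a y c.
Proof. by case: tri => _ h _; have := h 1 a x y c; rewrite !scale1r. Qed.
Lemma mDr a b x y : m a b (x + y) = m a b x + m a b y.
Proof. by case: tri => _ _ h; have := h 1 a b x y; rewrite !scale1r. Qed.
Lemma mZl k x b c : m (k *: x) b c = k *: m x b c.
Proof. by case: tri => h _ _; rewrite -[k *: x]addr0 h m0l addr0. Qed.
Lemma mZm k a x c : m a (k *: x) c = k *: m a x c.
Proof. by case: tri => _ h _; rewrite -[k *: x]addr0 h m0m addr0. Qed.
Lemma mZr k a b x : m a b (k *: x) = k *: m a b x.
Proof. by case: tri => _ _ h; rewrite -[k *: x]addr0 h m0r addr0. Qed.

Lemma chk_sound (Q : seq nat -> T) fuel l :
  chk fuel l -> \sum_(t <- l) w ^+ t.1 *: Q t.2 = 0.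
Proof.
elim: fuel l => [|k IH] [|t r] //=; rewrite ?big_nil //.
case/and3P => H1 H2 H3.
rewrite big_cons (perm_big _ (perm_to_rem H1)) big_cons.
rewrite (perm_big _ (perm_to_rem H2)) big_cons IH //= addr0 !addrA.
rewrite -!scalerDl !prim_expr_mod // !exprD.
rewrite -{1}[w ^+ t.1]mulr1 -!mulrDr expr1.
by rewrite w_sum0 mulr0 scale0r.
Qed.

Definition Pw (xs : seq T) := m (m xs`_0 xs`_1 xs`_2) xs`_3 xs`_4.

Lemma innerf (g : nat -> T)
  (a1 : forall a b c d f, m a (m b c d) f = m (m a b c) d f)
  (a2 : forall a b c d f, m a b (m c d f) = m (m a b c) d f) :
  tcomm m w (tcomm m w (g 0%N) (g 1%N) (g 2%N)) (g 3%N) (g 4%N)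
  = \sum_(p <- L0f) w ^+ p.1.1 *: (w ^+ p.1.2 *: Pw (map g p.2)).
Proof.
rewrite /tcomm conjw.
rewrite !(mDl, mDm, mDr, mZl, mZm, mZr) !scalerDr.
rewrite !a1 !a2.
rewrite /L0f !big_cons big_nil /Pw /= !expr0 !scale1r !expr1 !addr0 !addrA.
by [].
Qed.

Lemma inners (g : nat -> T)
  (a1 : forall a b c d f, m a (m b c d) f = m (m a d c) b f)
  (a2 : forall a b c d f, m a b (m c d f) = m (m a b c) d f) :
  tcomm m w (tcomm m w (g 0%N) (g 1%N) (g 2%N)) (g 3%N) (g 4%N)
  = \sum_(p <- L0s) w ^+ p.1.1 *: (w ^+ p.1.2 *: Pw (map g p.2)).
Proof.
rewrite /tcomm conjw.
rewrite !(mDl, mDm, mDr, mZl, mZm, mZr) !scalerDr.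
rewrite !a1 !a2.
rewrite /L0s !big_cons big_nil /Pw /= !expr0 !scale1r !expr1 !addr0 !addrA.
by [].
Qed.

Lemma rot1 a b c : tcomm m w a b c = w *: tcomm m w b c a.
Proof.
rewrite /tcomm conjw !scalerDr !scalerA -!exprS -expr2 w3 scale1r.
set A := w *: m b c a; set B := w ^+ 2 *: m c a b; set C := m a b c.
set D := w *: m a c b; set E := m c b a; set F := w ^+ 2 *: m b a c.
by rewrite scale1r [in RHS](addrC (A + B) C) [in RHS]addrA (addrAC _ D E) (addrAC _ D F).
Qed.

Section Assemble.
Variables (L0 : seq ((nat * nat) * seq nat)).
Hypothesis inner : forall g : nat -> T,
  tcomm m w (tcomm m w (g 0%N) (g 1%N) (g 2%N)) (g 3%N) (g 4%N)
  = \sum_(p <- L0) w ^+ p.1.1 *: (w ^+ p.1.2 *: Pw (map g p.2)).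
Hypothesis ck : chk 720 [seq comp s p | s <- S20, p <- L0].

Lemma assemble a b c d f :
  tcomm_block m w a b c d f + tcomm_block m w b c d f a
  + tcomm_block m w c d f a b + tcomm_block m w d f a b c
  + tcomm_block m w f a b c d = 0.
Proof.
pose E j := nth 0 [:: a; b; c; d; f] j.
have -> : tcomm_block m w a b c d f + tcomm_block m w b c d f a
  + tcomm_block m w c d f a b + tcomm_block m w d f a b c
  + tcomm_block m w f a b c d =
  \sum_(s <- S20) tcomm m w (tcomm m w (E s`_0) (E s`_1) (E s`_2)) (E s`_3) (E s`_4).
  by rewrite /S20 !big_cons big_nil /tcomm_block /E /= !addr0 !addrA.
rewrite (eq_bigr (fun s => \sum_(p <- L0) w ^+ p.1.1 *:
           (w ^+ p.1.2 *: Pw (map (fun i => E (nth 0%N s i)) p.2)))); last first.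
  by move=> s _; exact: (inner (fun i => E (nth 0%N s i))).
rewrite (eq_bigr (fun s => \sum_(p <- L0)
           (fun t => w ^+ t.1 *: Pw (map E t.2)) (comp s p))); last first.
  move=> s _; apply: eq_bigr => p _.
  by rewrite /comp /= scalerA -exprD prim_expr_mod // map_comp.
have := @chk_sound (fun u => Pw (map E u)) _ _ ck.
by rewrite big_allpairs_dep.
Qed.
End Assemble.
End Main.

Theorem theorem1 (R : realType) (T : lmodType R[i]) (m : T -> T -> T -> T)
  (w : R[i]) :
  ternary_algebra m -> 3.-primitive_root w ->
  forall a b c d f : T,
    [/\ tcomm m w a b c = w *: tcomm m w b c a,
        tcomm m w a b c = conjc w *: tcomm m w c a b,
        tcomm_conj m w a b c = conjc w *: tcomm_conj m w b c a,
        tcomm_conj m w a b c = w *: tcomm_conj m w c a b &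
        tcomm_block m w a b c d f + tcomm_block m w b c d f a
        + tcomm_block m w c d f a b + tcomm_block m w d f a b c
        + tcomm_block m w f a b c d = 0].
Proof.
move=> [tri ass] prim a b c d f.
have cw := conjw R w prim.
have primc : 3.-primitive_root (conjc w).
  by rewrite cw prim_root_exp_coprime.
have tcc : forall x y z, tcomm_conj m w x y z = tcomm m (conjc w) x y z.
  by move=> x y z; rewrite /tcomm_conj /tcomm conjcK.
have r1 := rot1 R T m w prim; have r1c := rot1 R T m (conjc w) primc.
split.
- exact: r1.
- by rewrite (r1 a b c) (r1 b c a) scalerA cw -expr2.
- by rewrite !tcc (r1c a b c).
- rewrite !tcc (r1c a b c) (r1c b c a) scalerA -expr2 cw -exprM.
  by rewrite -(prim_expr_mod prim (2 * 2)%N).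
case: ass => ass.
- refine (assemble R T m w prim L0f _ chkf a b c d f) => g; apply: (innerf R T m w tri prim).
  + by move=> x y z u v; case: (ass x y z u v) => -> _.
  + by move=> x y z u v; case: (ass x y z u v) => -> ->.
- refine (assemble R T m w prim L0s _ chks a b c d f) => g; apply: (inners R T m w tri prim).
  + by move=> x y z u v; case: (ass x u z y v) => -> _.
  + by move=> x y z u v; case: (ass x y z u v) => -> ->.
Qed.
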